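(* In the setting described in the context, $V$ is an irreducible $\mathcal U$-module on which the generators act as follows: $y^+_0$ acts as $a^{-1}A$, $y^+_1$ as $a^{*-1}A^*$, $y^-_0$ as $b^{*-1}B^*$, $y^-_1$ as $b^{-1}B$, $k_0$ as $K^*$, $k_1$ as $K^{*-1}$, $k_0^{-1}$ as $K^{*-1}$, and $k_1^{-1}$ as $K^*$.
   Context: $\mathbb K$ is an algebraically closed field, $q\in\mathbb K$ nonzero and not a root of unity, $[3]_q=\frac{q^3-q^{-3}}{q-q^{-1}}$, $V$ a nonzero finite-dimensional $\mathbb K$-vector space. $\mathcal U$ (isomorphic to $U_q(\widehat{sl}_2)$) is the unital associative $\mathbb K$-algebra with generators $y^{\pm}_i,k_i^{\pm1}$ ($i\in\{0,1\}$) and relations: $k_ik_i^{-1}=k_i^{-1}k_i=1$; $k_0k_1$ central; $\frac{qy^+_ik_i-q^{-1}k_iy^+_i}{q-q^{-1}}=1$; $\frac{qk_iy^-_i-q^{-1}y^-_ik_i}{q-q^{-1}}=1$; $\frac{qy^-_iy^+_i-q^{-1}y^+_iy^-_i}{q-q^{-1}}=1$; $\frac{qy^+_iy^-_j-q^{-1}y^-_jy^+_i}{q-q^{-1}}=k_0^{-1}k_1^{-1}$ ($i\ne j$); $(y^{\pm}_i)^3y^{\pm}_j-[3]_q(y^{\pm}_i)^2y^{\pm}_jy^{\pm}_i+[3]_qy^{\pm}_iy^{\pm}_j(y^{\pm}_i)^2-y^{\pm}_j(y^{\pm}_i)^3=0$ ($i\ne j$). A tridiagonal pair on $V$ is an ordered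 pair $A,A^*$ of linear maps $V\to V$ such that: (i) each is diagonalizable; (ii) there is an ordering $V_0,\dots,V_d$ of the eigenspaces of $A$ with $A^*V_i\subseteq V_{i-1}+V_i+V_{i+1}$ ($V_{-1}=V_{d+1}=0$); (iii) there is an ordering $V^*_0,\dots,V^*_\delta$ of the eigenspaces of $A^*$ with $AV^*_i\subseteq V^*_{i-1}+V^*_i+V^*_{i+1}$ ($V^*_{-1}=V^*_{\delta+1}=0$); (iv) no subspace $W\ne0,V$ satisfies $AW\subseteq W$, $A^*W\subseteq W$. It is known $d=\delta$; orderings as in (ii),(iii) are called standard. Setting: $A,A^*$ is a tridiagonal pair on $V$; $V_0,\dots,V_d$ (resp. $V^*_0,\dots,V^*_d$) is a standard ordering of the eigenspaces of $A$ (resp. $A^*$); the eigenvalue of $A$ on $V_i$ is $aq^{2i-d}$ and that of $A^*$ on $V^*_i$ is $a^*q^{d-2i}$ for nonzero $a,a^*\in\mathbb K$; $b,b^*\in\mathbb K$ nonzero. For $0\le i\le d$, each of the families $(V^*_0+\cdots+V^*_i)\cap(V_0+\cdots+V_{d-i})$, $(V^*_{d-i}+\cdots+V^*_d)\cap(V_i+\cdots+V_d)$, $(V^*_{d-i}+\cdots+V^*_d)\cap(V_0+\cdots+V_{d-i})$ is a decomposition of $V$ (nonzero subspaces, direct sum equal to $V$). $B$ acts as $bq^{2i-d}I$ on $(V^*_0+\cdots+V^*_i)\cap(V_0+\cdots+V_{d-i})$; $B^*$ acts as $b^*q^{d-2i}I$ on $(V^*_{d-i}+\cdots+V^*_d)\cap(V_i+\cdots+V_d)$;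 $K^*$ acts as $q^{2i-d}I$ on $(V^*_{d-i}+\cdots+V^*_d)\cap(V_0+\cdots+V_{d-i})$. *)

(* Defs.v *)
From HB Require Import structures.
From mathcomp Require Import all_boot all_order all_algebra.
Set Implicit Arguments. Unset Strict Implicit. Unset Printing Implicit Defensive.
Import Order.TTheory GRing.Theory Num.Theory.
Local Open Scope ring_scope.

(* Conventions: V = 'rV[K]_n (row vectors), a linear map V -> V is a matrix
   M : 'M[K]_n acting by  v |-> v *m M. *)

Section Defs.
Variables (K : fieldType) (n : nat).
Implicit Types (A As : 'M[K]_n) (th : nat -> K).

(* Product X1 X2 ... Xk in the algebra, as an operator on V:
   (X1 X2 ... Xk) . v = X1 . (X2 . ( ... (Xk . v))) = v *m Xk *m ... *m X1 *)
Definition word (s : seq 'M[K]_n) : 'M[K]_n :=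
  foldr (fun X acc => acc *m X) 1%:M s.

Definition standard_ordering A As (d : nat) th : Prop :=
  [/\ (forall i j, (i <= d)%N -> (j <= d)%N -> th i = th j -> i = j),
      (forall i, (i <= d)%N -> eigenvalue A (th i)),
      (forall x, eigenvalue A x -> exists2 i, (i <= d)%N & x = th i) &
      (forall i, (i <= d)%N ->
         (eigenspace A (th i) *m As <=
            (if i is i'.+1 then eigenspace A (th i') else 0)
            + eigenspace A (th i)
            + (if (i < d)%N then eigenspace A (th i.+1) else 0))%MS)].

Definition TD_pair A As : Prop :=
  [/\ (0 < n)%N, diagonalizable A /\ diagonalizable As,
      (exists d th, standard_ordering A As d th),
      (exists d th, standard_ordering As A d th) &
      (forall W : 'M[K]_n, stablemx W A -> stablemx W As ->
         W = 0 \/ (W == 1%:M)%MS)].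

Definition is_decomposition (d : nat) (W : nat -> 'M[K]_n) : Prop :=
  [/\ (forall i, (i <= d)%N -> W i != 0),
      mxdirect (\sum_(i < d.+1) W i) &
      (\sum_(i < d.+1) W i == 1%:M)%MS].

Definition acts_as_scalar (d : nat) (W : nat -> 'M[K]_n) (c : nat -> K)
    (M : 'M[K]_n) : Prop :=
  forall i, (i <= d)%N -> forall v : 'rV[K]_n, (v <= W i)%MS ->
    v *m M = c i *: v.

(* The assignment y^+_0 |-> y0p, y^+_1 |-> y1p, y^-_0 |-> y0m, y^-_1 |-> y1m,
   k_0 |-> k0, k_1 |-> k1, k_0^{-1} |-> k0i, k_1^{-1} |-> k1i
   satisfies the defining relations of U, i.e. defines a U-module structure
   on V.  Index false stands for 0 and true for 1. *)
Definition Urep (q : K) (y0p y1p y0m y1m k0 k1 k0i k1i : 'M[K]_n) : Prop :=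
  let yp (i : bool) := if i then y1p else y0p in
  let ym (i : bool) := if i then y1m else y0m in
  let k (i : bool) := if i then k1 else k0 in
  let ki (i : bool) := if i then k1i else k0i in
  let c := (q - q^-1)^-1 in
  let q3 := (q ^+ 3 - q ^- 3) / (q - q^-1) in
  [/\ (forall i, word [:: k i; ki i] = 1%:M /\ word [:: ki i; k i] = 1%:M)
      /\ (forall X, X \in [:: y0p; y1p; y0m; y1m; k0; k1; k0i; k1i] ->
         word [:: k0; k1; X] = word [:: X; k0; k1]),
      (forall i, c *: (q *: word [:: yp i; k i] - q^-1 *: word [:: k i; yp i])
                 = 1%:M),
      (forall i, c *: (q *: word [:: k i; ym i] - q^-1 *: word [:: ym i; k i])
                 = 1%:M)
      /\ (forall i, c *: (q *: word [:: ym i; yp i] - q^-1 *: word [:: yp i; ym i])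
                 = 1%:M),
      (forall i j, i != j ->
         c *: (q *: word [:: yp i; ym j] - q^-1 *: word [:: ym j; yp i])
         = word [:: k0i; k1i]) &
      (forall (y : bool -> 'M[K]_n) i j, (y = yp \/ y = ym) -> i != j ->
         word [:: y i; y i; y i; y j] - q3 *: word [:: y i; y i; y j; y i]
         + q3 *: word [:: y i; y j; y i; y i] - word [:: y j; y i; y i; y i]
         = 0)].

(* V is irreducible for the action of the given generators (V nonzero and
   no subspace other than 0 and V is stable under all of them, hence under
   the whole algebra they generate). *)
Definition irreducible_for (gens : seq 'M[K]_n) : Prop :=
  (0 < n)%N /\
  forall W : 'M[K]_n, (forall X, X \in gens -> stablemx W X) ->
    W = 0 \/ (W == 1%:M)%MS.

End Defs.

(* Main.v *)
Require Import Defs.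
From HB Require Import structures.
From mathcomp Require Import all_boot all_order all_algebra.
Import Order.TTheory GRing.Theory Num.Theory.
Local Open Scope ring_scope.
From mathcomp Require Import ring zify.

Module Aux.
Set Implicit Arguments. Unset Strict Implicit.

Section Gen.
Variables (F : fieldType) (n : nat).
Implicit Types (M N X Y S T : 'M[F]_n).

Lemma ext_decomp (I : finType) (P : pred I) (W : I -> 'M[F]_n) M N :
  (1%:M <= \sum_(i | P i) W i)%MS ->
  (forall i, P i -> W i *m M = W i *m N) -> M = N.
Proof.
move=> full eqW; apply/eqP; rewrite -subr_eq0 -submx0.
have H0 : ((\sum_(i | P i) W i)%MS *m (M - N) <= (0 : 'M_n))%MS.
  rewrite (sumsmxMr P W (M - N)); apply/sumsmx_subP => i Pi.
  by rewrite mulmxBr eqW ?subrr.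
by rewrite -[M - N]mul1mx; apply: submx_trans H0; apply: submxMr.
Qed.

Lemma mulWX_split S X (lam : F) :
  S *m X = S *m (X - lam%:M) + lam *: S.
Proof. by rewrite mulmxBr mul_mx_scalar subrK. Qed.

Lemma rel_check (d : nat) (W : nat -> 'M[F]_n) Y X (c lam : nat -> F)
    (Nx : nat -> 'M[F]_n) (rho al be ka : F) :
  (1%:M <= \sum_(i < d.+1) W i)%MS ->
  (forall i, (i <= d)%N -> W i *m Y = c i *: W i) ->
  (forall i, (i <= d)%N -> W i *m (X - (lam i)%:M) <= Nx i)%MS ->
  (forall i, (i <= d)%N -> Nx i *m Y = (rho * c i) *: Nx i) ->
  al + be * rho = 0 ->
  (forall i, (i <= d)%N -> (al + be) * c i * lam i = ka) ->
  al *: (Y *m X) + be *: (X *m Y) = ka%:M.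
Proof.
move=> full hY hX hN hr hk.
apply: (@ext_decomp _ xpredT (fun i : 'I_d.+1 => W i) _ _ full) => i _.
have ltid : (i <= d)%N by rewrite -ltnS ltn_ord.
have /submxP[u Du] := hX i ltid.
set D := W i *m (X - (lam i)%:M) in Du.
have DY : D *m Y = (rho * c i) *: D by rewrite Du -mulmxA hN // scalemxAr.
have WX : W i *m X = D + lam i *: W i by rewrite /D -mulWX_split.
have e1 : W i *m (Y *m X) = c i *: D + (c i * lam i) *: W i.
  by rewrite mulmxA hY // -scalemxAl WX scalerDr scalerA.
have e2 : W i *m (X *m Y) = (rho * c i) *: D + (lam i * c i) *: W i.
  by rewrite mulmxA WX mulmxDl DY -scalemxAl hY // scalerA.
rewrite mulmxDr -!scalemxAr e1 e2 mul_mx_scalar -(hk i) //.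
rewrite !scalerDr !scalerA.
have -> : be * (rho * c i) = - (al * c i).
  have -> : al = - (be * rho) by apply/eqP; rewrite -subr_eq0 opprK hr.
  by rewrite mulNr opprK mulrA.
rewrite scaleNr addrACA addrN add0r -scalerDl.
congr (_ *: _); rewrite mulrDl mulrDl mulrA; congr (_ + _).
by rewrite [lam i * c i]mulrC mulrA.
Qed.

Lemma comm_eig X Y S (al be ka th nu mu : F) :
  al != 0 -> al *: (Y *m X) + be *: (X *m Y) = ka%:M -> S *m X = th *: S ->
  al * nu = - (be * th) -> al * mu * (th - nu) = ka ->
  (S *m (Y - mu%:M) <= eigenspace X nu)%MS.
Proof.
move=> al0 hrel SX hnu hmu; apply/eigenspaceP.
have key : al *: (S *m Y *m X) = ka *: S - (be * th) *: (S *m Y).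
  have := congr1 (mulmx S) hrel.
  rewrite mulmxDr -!scalemxAr !mulmxA SX -scalemxAl mul_mx_scalar => <-.
  by rewrite scalerA addrK.
apply: (scalerI al0).
rewrite mulmxBr mul_mx_scalar mulmxBl -scalemxAl SX scalerA.
rewrite scalerBr key !scalerBr !scalerA -hmu hnu.
rewrite addrAC -scalerBl scaleNr addrC; congr (_ + _); rewrite -scaleNr.
congr (_ *: _); rewrite -hnu; ring.
Qed.

Lemma serre_check (d : nat) (W : nat -> 'M[F]_n) Y X (c : nat -> F)
    (near : nat -> nat -> bool) (q3 qq : F) :
  qq != 0 -> q3 = 1 + qq + qq^-1 ->
  (1%:M <= \sum_(i < d.+1) W i)%MS ->
  (forall i, (i <= d)%N -> W i *m Y = c i *: W i) ->
  (forall k, (k <= d)%N -> W k *m X <= \sum_(j < d.+1 | near k j) W j)%MS ->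
  (forall k j, (k <= d)%N -> (j <= d)%N -> near k j ->
     (c j - c k) * (c j - qq * c k) * (c j - qq^-1 * c k) = 0) ->
  word [:: Y; Y; Y; X] - q3 *: word [:: Y; Y; X; Y]
    + q3 *: word [:: Y; X; Y; Y] - word [:: X; Y; Y; Y] = 0.
Proof.
move=> qq0 hq3 full hY hX hP.
apply: (@ext_decomp _ xpredT (fun i : 'I_d.+1 => W i) _ _ full) => k _.
have ltkd : (k <= d)%N by rewrite -ltnS ltn_ord.
set ck := c k.
pose Pm := Y *m Y *m Y - (q3 * ck) *: (Y *m Y) + (q3 * ck ^+ 2) *: Y - (ck ^+ 3)%:M.
have hPm : forall j, (j <= d)%N -> W j *m Pm =
   (c j ^+ 3 - q3 * ck * c j ^+ 2 + q3 * ck ^+ 2 * c j - ck ^+ 3) *: W j.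
  move=> j ljd; have hYj := hY j ljd.
  rewrite /Pm !mulmxDr !mulmxN -!scalemxAr !mulmxA mul_mx_scalar.
  do 3! rewrite ?hYj -?scalemxAl.
  by rewrite !scalerA !scalerDl !scaleNr !exprS expr0 !mulr1 !mulrA.
rewrite mulmx0.
have -> : W k *m (word [:: Y; Y; Y; X] - q3 *: word [:: Y; Y; X; Y]
    + q3 *: word [:: Y; X; Y; Y] - word [:: X; Y; Y; Y]) = (W k *m X) *m Pm.
  have hYk := hY k ltkd.
  rewrite /word /= !mul1mx /Pm !mulmxDr !mulmxN -!scalemxAr !mulmxA mul_mx_scalar.
  do 3! rewrite ?hYk -?scalemxAl.
  by rewrite !scalerA /ck !exprS expr0 !mulr1 !mulrA.
have /sub_sumsmxP[u ->] := hX k ltkd.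
rewrite mulmx_suml big1 // => j nj.
have ljd : (j <= d)%N by rewrite -ltnS ltn_ord.
rewrite -mulmxA hPm //.
have -> : c j ^+ 3 - q3 * ck * c j ^+ 2 + q3 * ck ^+ 2 * c j - ck ^+ 3
   = (c j - c k) * (c j - qq * c k) * (c j - qq^-1 * c k).
  by rewrite hq3 /ck; field.
by rewrite hP // scale0r mulmx0.
Qed.




Lemma direct_cap0 (d : nat) (W : nat -> 'M[F]_n) i j m (S : 'M[F]_(m, n)) :
  mxdirect (\sum_(k < d.+1) W k) -> (i <= d)%N -> (j <= d)%N -> i != j ->
  (S <= W i)%MS -> (S <= W j)%MS -> S = 0.
Proof.
move=> dx lid ljd nij SWi SWj.
have /mxdirect_sumsP dx' := dx.
have := dx' (Ordinal (leq_ltn_trans lid (ltnSn d))) isT.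
move=> /= H; apply/eqP; rewrite -submx0 -H sub_capmx SWi /=.
apply: (submx_trans SWj); apply: (sumsmx_sup (Ordinal (leq_ltn_trans ljd (ltnSn d)))) => //=.
by rewrite eq_sym.
Qed.

Lemma flag_sub (d : nat) (W : nat -> 'M[F]_n) (P : pred nat) (U L : 'M[F]_n) :
  (1%:M <= \sum_(k < d.+1) W k)%MS ->
  (forall k, (k <= d)%N -> P k -> W k <= U)%MS ->
  (forall k, (k <= d)%N -> ~~ P k -> W k <= L)%MS ->
  (U :&: L = 0)%MS ->
  (U <= \sum_(k < d.+1 | P k) W k)%MS.
Proof.
move=> full hU hL UL0.
have : (U <= (\sum_(k < d.+1 | P k) W k) + (\sum_(k < d.+1 | ~~ P k) W k))%MS.
  have := submx_trans (submx1 U) full.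
  by rewrite (bigID (fun k : 'I_d.+1 => P k)) /=.
case/sub_addsmxP => u Du.
have S1U : ((\sum_(k < d.+1 | P k) W k) <= U)%MS.
  by apply/sumsmx_subP => k Pk; apply: hU => //; rewrite -ltnS ltn_ord.
have S2L : ((\sum_(k < d.+1 | ~~ P k) W k) <= L)%MS.
  by apply/sumsmx_subP => k Pk; apply: hL => //; rewrite -ltnS ltn_ord.
have z : u.2 *m (\sum_(k < d.+1 | ~~ P k) W k)%MS = 0.
  suff : (u.2 *m (\sum_(k < d.+1 | ~~ P k) W k)%MS <= U :&: L)%MS.
    by rewrite UL0 submx0 => /eqP.
  rewrite sub_capmx; apply/andP; split.
    have -> : u.2 *m (\sum_(k < d.+1 | ~~ P k) W k)%MS
       = U - u.1 *m (\sum_(k < d.+1 | P k) W k)%MS by rewrite Du addrC addKr.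
    by rewrite addmx_sub // eqmx_opp (submx_trans (submxMl _ _) S1U).
  exact: submx_trans (submxMl _ _) S2L.
by rewrite Du z addr0 submxMl.
Qed.

Lemma dsum_cap (d : nat) (W : nat -> 'M[F]_n) (P Q : pred nat) m
    (x : 'M[F]_(m, n)) :
  mxdirect (\sum_(k < d.+1) W k) ->
  (x <= \sum_(k < d.+1 | P k) W k)%MS ->
  (x <= \sum_(k < d.+1 | Q k) W k)%MS ->
  (x <= \sum_(k < d.+1 | P k && Q k) W k)%MS.
Proof.
move=> dx /sub_sumsmxP[u Du] /sub_sumsmxP[v Dv].
pose C (k : 'I_d.+1) := if P k then u k *m W k else 0.
pose C' (k : 'I_d.+1) := if Q k then v k *m W k else 0.
have xC : x = \sum_(k < d.+1) C k.
  rewrite Du [RHS](bigID (fun k : 'I_d.+1 => P k)) /= [X in _ + X]big1 ?addr0.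
    by apply: eq_bigr => k Pk; rewrite /C Pk.
  by move=> k /negPf nP; rewrite /C nP.
have xC' : x = \sum_(k < d.+1) C' k.
  rewrite Dv [RHS](bigID (fun k : 'I_d.+1 => Q k)) /= [X in _ + X]big1 ?addr0.
    by apply: eq_bigr => k Pk; rewrite /C' Pk.
  by move=> k /negPf nP; rewrite /C' nP.
have xfull : (x <= \sum_(k < d.+1) W k)%MS.
  by rewrite xC summx_sub_sums // => k _; rewrite /C; case: (P k); rewrite ?sub0mx ?submxMl.
case: (sub_dsumsmx dx xfull) => A_ hA xA uniq.
have eC : forall k, C k = C' k.
  move=> k; rewrite (uniq C) //; last by move=> i _; rewrite /C; case: (P i); rewrite ?sub0mx ?submxMl.
  rewrite (uniq C') //; by move=> i _; rewrite /C'; case: (Q i); rewrite ?sub0mx ?submxMl.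
rewrite xC (bigID (fun k : 'I_d.+1 => P k && Q k)) /= [X in _ + X]big1 ?addr0.
  apply: summx_sub_sums => k /andP[Pk _]; rewrite /C Pk; exact: submxMl.
move=> k; rewrite negb_and => /orP[nP|nQ]; first by rewrite /C (negPf nP).
by rewrite eC /C' (negPf nQ).
Qed.

Section Flags.
Variables (d : nat) (f : nat -> 'M[F]_n).

Definition tri (Y : 'M[F]_n) := forall i, (i <= d)%N ->
  (f i *m Y <= (if i is i'.+1 then f i' else 0) + f i
               + (if (i < d)%N then f i.+1 else 0))%MS.

Lemma Gf_ord m : (\sum_(m <= j < d.+1) f j)%MS = (\sum_(j < d.+1 | (m <= j)%N) f j)%MS.
Proof. by rewrite big_geq_mkord. Qed.

Lemma Hsup j m : (j <= m)%N -> (f j <= \sum_(i < m.+1) f i)%MS.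
Proof. by move=> ljm; apply: (sumsmx_sup (Ordinal (ljm : (j < m.+1)%N))). Qed.

Lemma Hmul m k (M : 'M[F]_n) (S : 'M[F]_(k, n)) :
  (forall j, (j <= m)%N -> f j *m M <= S)%MS -> ((\sum_(i < m.+1) f i)%MS *m M <= S)%MS.
Proof.
move=> h; rewrite (sumsmxMr _ (fun i : 'I_m.+1 => f i)); apply/sumsmx_subP => i _.
by apply: h; rewrite -ltnS ltn_ord.
Qed.

Lemma Hsub m k (S : 'M[F]_(k, n)) :
  (forall j, (j <= m)%N -> f j <= S)%MS -> ((\sum_(i < m.+1) f i)%MS <= S)%MS.
Proof. by move=> h; rewrite -[X in (X <= _)%MS]mulmx1; apply: Hmul => j /h; rewrite mulmx1. Qed.

Lemma Gsup j m : (m <= j)%N -> (j <= d)%N -> (f j <= \sum_(m <= i < d.+1) f i)%MS.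
Proof.
by move=> lmj ljd; rewrite Gf_ord; apply: (sumsmx_sup (Ordinal (ljd : (j < d.+1)%N))).
Qed.

Lemma Gmul m k (M : 'M[F]_n) (S : 'M[F]_(k, n)) :
  (forall j, (m <= j)%N -> (j <= d)%N -> f j *m M <= S)%MS ->
  ((\sum_(m <= i < d.+1) f i)%MS *m M <= S)%MS.
Proof.
move=> h; rewrite Gf_ord (sumsmxMr _ (fun i : 'I_d.+1 => f i)).
apply/sumsmx_subP => i /= lmi.
by apply: h => //; rewrite -ltnS ltn_ord.
Qed.

Lemma Gsub m k (S : 'M[F]_(k, n)) :
  (forall j, (m <= j)%N -> (j <= d)%N -> f j <= S)%MS ->
  ((\sum_(m <= i < d.+1) f i)%MS <= S)%MS.
Proof. by move=> h; rewrite -[X in (X <= _)%MS]mulmx1; apply: Gmul => j ? ?; rewrite mulmx1; apply: h. Qed.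

Lemma HH m m' : (m <= m')%N -> ((\sum_(i < m.+1) f i)%MS <= \sum_(i < m'.+1) f i)%MS.
Proof. by move=> h; apply: Hsub => j ljm; apply: Hsup; apply: leq_trans h. Qed.

Lemma GG m m' : (m' <= m)%N -> ((\sum_(m <= i < d.+1) f i)%MS <= \sum_(m' <= i < d.+1) f i)%MS.
Proof. by move=> h; apply: Gsub => k lmk lkd; apply: Gsup => //; apply: leq_trans lmk. Qed.

Lemma G0 : ((\sum_(d.+1 <= i < d.+1) f i)%MS = 0).
Proof. by rewrite big_geq. Qed.

Lemma own_lower (X : 'M[F]_n) (lam : nat -> F) m :
  (forall j, f j *m X = lam j *: f j) ->
  ((\sum_(i < m.+1) f i)%MS *m (X - (lam m)%:M) <=
     if m is m'.+1 then \sum_(i < m'.+1) f i else 0)%MS.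
Proof.
move=> hX; apply: Hmul => j ljm.
rewrite mulmxBr hX mul_mx_scalar -scalerBl.
case: (ltngtP j m) => [ltjm||->]; last by rewrite subrr scale0r sub0mx.
- case: m ltjm ljm => // m' ltjm _.
  by apply: scalemx_sub; apply: Hsup.
- by rewrite ltnNge ljm.
Qed.

Lemma own_upper (X : 'M[F]_n) (lam : nat -> F) m :
  (forall j, f j *m X = lam j *: f j) ->
  ((\sum_(m <= i < d.+1) f i)%MS *m (X - (lam m)%:M) <=
     \sum_(m.+1 <= i < d.+1) f i)%MS.
Proof.
move=> hX; apply: Gmul => j lmj ljd.
rewrite mulmxBr hX mul_mx_scalar -scalerBl.
case: (ltngtP m j) => [ltmj||->]; last by rewrite subrr scale0r sub0mx.
- by apply: scalemx_sub; apply: Gsup.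
- by rewrite ltnNge lmj.
Qed.

Lemma tri_sub (Y : 'M[F]_n) i : tri Y -> (i <= d)%N ->
  forall k (S : 'M[F]_(k, n)),
  ((if i is i'.+1 then f i' else 0) <= S)%MS -> (f i <= S)%MS ->
  ((if (i < d)%N then f i.+1 else 0) <= S)%MS ->
  (f i *m Y <= S)%MS.
Proof.
move=> hY lid k S h1 h2 h3; apply: submx_trans (hY i lid) _.
by rewrite !addsmx_sub h1 h2 h3.
Qed.

Lemma oth_H (Y : 'M[F]_n) m : tri Y -> (m <= d)%N ->
  ((\sum_(i < m.+1) f i)%MS *m Y <= \sum_(i < m.+2) f i)%MS.
Proof.
move=> hY lmd; apply: Hmul => j ljm.
apply: tri_sub => //; first exact: leq_trans lmd.
- by case: j ljm => [|j] ljm; rewrite ?sub0mx //; apply: Hsup; lia.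
- by apply: Hsup; lia.
- by case: ifP; rewrite ?sub0mx // => _; apply: Hsup; lia.
Qed.

Lemma oth_G (Y : 'M[F]_n) m : tri Y ->
  ((\sum_(m <= i < d.+1) f i)%MS *m Y <= \sum_(m.-1 <= i < d.+1) f i)%MS.
Proof.
move=> hY; apply: Gmul => j lmj ljd.
apply: tri_sub => //.
- by case: j lmj ljd => [|j] lmj ljd; rewrite ?sub0mx //; apply: Gsup; lia.
- by apply: Gsup => //; lia.
- by case: ifP; rewrite ?sub0mx // => ltjd; apply: Gsup; lia.
Qed.

Lemma tri_shift (Y : 'M[F]_n) (mu : F) : tri Y -> tri (Y - mu%:M).
Proof.
move=> hY i lid; rewrite mulmxBr mul_mx_scalar.
apply: addmx_sub; first exact: hY.
rewrite eqmx_opp; apply: scalemx_sub; apply: submx_trans (addsmxSl _ _).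
exact: addsmxSr.
Qed.

Lemma tri_of_lower (Y : 'M[F]_n) (mu : nat -> F) :
  (forall j, (j <= d)%N -> f j *m (Y - (mu j)%:M) <= if j is j'.+1 then f j' else 0)%MS ->
  tri Y.
Proof.
move=> h j ljd; rewrite (mulWX_split _ _ (mu j)).
apply: addmx_sub.
  apply: submx_trans (h j ljd) _; apply: submx_trans (addsmxSl _ _) (addsmxSl _ _).
by apply: scalemx_sub; apply: submx_trans (addsmxSr _ _) (addsmxSl _ _).
Qed.

Lemma tri_of_upper (Y : 'M[F]_n) (mu : nat -> F) :
  f d.+1 = 0 ->
  (forall j, (j <= d)%N -> f j *m (Y - (mu j)%:M) <= f j.+1)%MS ->
  tri Y.
Proof.
move=> fd h j ljd; rewrite (mulWX_split _ _ (mu j)).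
apply: addmx_sub; last first.
  by apply: scalemx_sub; apply: submx_trans (addsmxSr _ _) (addsmxSl _ _).
apply: submx_trans (h j ljd) _.
case: ifP => ltjd; first exact: addsmxSr.
have -> : j = d by apply/eqP; rewrite eqn_leq ljd leqNgt ltjd.
by rewrite fd sub0mx.
Qed.

Lemma tri_scale (Y : 'M[F]_n) (s : F) : tri Y -> tri (s *: Y).
Proof. by move=> h i lid; rewrite -scalemxAr scalemx_sub // h. Qed.

Lemma tri_near (Y : 'M[F]_n) : tri Y -> forall k, (k <= d)%N ->
  (f k *m Y <= \sum_(j < d.+1 | (k.-1 <= j)%N && (j <= k.+1)%N) f j)%MS.
Proof.
move=> h k lkd; apply: (tri_sub h lkd).
- case: k lkd => [|k] lkd; rewrite ?sub0mx //.
  have lk : (k < d.+1)%N by apply: leq_trans lkd _.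
  apply: (@sumsmx_sup _ _ (Ordinal lk) _ _ _ _ (fun j : 'I_d.+1 => f j)) => //=.
  by rewrite leqnn /= leqW // leqW.
- apply: (@sumsmx_sup _ _ (Ordinal (lkd : (k < d.+1)%N)) _ _ _ _ (fun j : 'I_d.+1 => f j)) => //=.
  by rewrite leq_pred leqW.
- case: ifP => ltkd; rewrite ?sub0mx //.
  apply: (@sumsmx_sup _ _ (Ordinal (ltkd : (k.+1 < d.+1)%N)) _ _ _ _ (fun j : 'I_d.+1 => f j)) => //=.
  by rewrite leqnn andbT (leq_trans (leq_pred k)) // leqW.
Qed.

End Flags.

End Gen.
Arguments own_upper {F n d f X lam} m _.


Lemma scal_mx (F : fieldType) n d (W : nat -> 'M[F]_n) c M :
  acts_as_scalar d W c M -> forall i, (i <= d)%N -> W i *m M = c i *: W i.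
Proof.
move=> h i lid; apply/row_matrixP => j.
by rewrite row_mul (h i lid) ?row_sub // !rowE scalemxAr.
Qed.

Section Arith.
Variables (K : fieldType) (q : K) (d : nat).
Hypothesis hq0 : q != 0.
Hypothesis hqr : forall m : nat, (0 < m)%N -> q ^+ m != 1.

Definition Qf i := q ^ (Posz (2 * i) - Posz d).

Lemma QfE i : Qf i = q ^+ (2 * i) / q ^+ d.
Proof. by rewrite /Qf expfzDr // exprnN. Qed.

Lemma Qf_neq0 i : Qf i != 0.
Proof. by rewrite /Qf expfz_neq0. Qed.

Lemma QfV i : q ^ (Posz d - Posz (2 * i)) = (Qf i)^-1.
Proof. by rewrite /Qf invr_expz opprB. Qed.

Lemma QfS i : Qf i.+1 = q ^+ 2 * Qf i.
Proof. by rewrite !QfE mulnS exprD mulrA. Qed.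

Lemma Qf_rev i : (i <= d)%N -> Qf (d - i) = (Qf i)^-1.
Proof.
move=> lid; rewrite !QfE.
have qn0 : forall k, q ^+ k != 0 by move=> k; rewrite expf_neq0.
have e : q ^+ (2 * (d - i)) = q ^+ d * q ^+ d / q ^+ (2 * i).
  apply: (mulIf (qn0 (2 * i)%N)); rewrite mulfVK // -!exprD.
  by congr (_ ^+ _); lia.
rewrite e; field.
by rewrite !qn0.
Qed.

Lemma qpow_neq1 k : (0 < k)%N -> q ^+ k != 1.
Proof. exact: hqr. Qed.

Lemma Qf_inj i j : Qf i = Qf j -> i = j.
Proof.
rewrite !QfE => /(mulIf (invr_neq0 (expf_neq0 d hq0))) => e.
wlog lij : i j e / (i <= j)%N.
  by move=> W; case: (leqP i j) => h; [exact: W | symmetry; apply: W => //; exact: ltnW].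
case: (ltngtP i j) => // ltij; last by rewrite ltnNge lij in ltij.
have h0 : (0 < 2 * (j - i))%N by lia.
have := @hqr (2 * (j - i))%N h0; move/negP; case.
apply/eqP; apply: (mulIf (expf_neq0 (2 * i) hq0)); rewrite mul1r -exprD.
by have -> : (2 * (j - i) + 2 * i = 2 * j)%N by lia.
Qed.

End Arith.

Section Main.
Variables (K : closedFieldType) (n : nat) (q : K) (A As B Bs Ks : 'M[K]_n)
  (d : nat) (a ast b bst : K).
Hypothesis hq0 : q != 0.
Hypothesis hqr : forall m : nat, (0 < m)%N -> q ^+ m != 1.
Hypotheses (ha : a != 0) (hast : ast != 0) (hb : b != 0) (hbst : bst != 0).

Definition th := fun i : nat => a * q ^ (Posz (2 * i) - Posz d).
Definition ths := fun i : nat => ast * q ^ (Posz d - Posz (2 * i)).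
Definition E := fun j : nat => eigenspace A (th j).
Definition Es := fun j : nat => eigenspace As (ths j).
Definition W1 := fun i : nat =>
    ((\sum_(j < i.+1) Es j) :&: (\sum_(j < (d - i).+1) E j))%MS.
Definition W2 := fun i : nat =>
    ((\sum_(d - i <= j < d.+1) Es j) :&: (\sum_(i <= j < d.+1) E j))%MS.
Definition W3 := fun i : nat =>
    ((\sum_(d - i <= j < d.+1) Es j) :&: (\sum_(j < (d - i).+1) E j))%MS.
Definition cB := fun i : nat => b * q ^ (Posz (2 * i) - Posz d).
Definition cBs := fun i : nat => bst * q ^ (Posz d - Posz (2 * i)).
Definition cK := fun i : nat => q ^ (Posz (2 * i) - Posz d).

Hypothesis hstd : standard_ordering A As d th.
Hypothesis hstds : standard_ordering As A d ths.
Hypotheses (D1 : is_decomposition d W1) (D2 : is_decomposition d W2)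
  (D3 : is_decomposition d W3).
Hypotheses (SB : acts_as_scalar d W1 cB B) (SBs : acts_as_scalar d W2 cBs Bs)
  (SK : acts_as_scalar d W3 cK Ks).

Local Notation Q := (@Qf _ q d).

Lemma thE i : th i = a * Q i. Proof. by []. Qed.
Lemma thsE i : ths i = ast / Q i. Proof. by rewrite /ths QfV. Qed.
Lemma cBE i : cB i = b * Q i. Proof. by []. Qed.
Lemma cBsE i : cBs i = bst / Q i. Proof. by rewrite /cBs QfV. Qed.
Lemma cKE i : cK i = Q i. Proof. by []. Qed.
Lemma Qn0 i : Q i != 0. Proof. exact: Qf_neq0. Qed.

Lemma E_eig j : E j *m A = th j *: E j.
Proof. by apply/eigenspaceP. Qed.
Lemma Es_eig j : Es j *m As = ths j *: Es j.
Proof. by apply/eigenspaceP. Qed.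

Lemma triA : tri d E As. Proof. by case: hstd. Qed.
Lemma triAs : tri d Es A. Proof. by case: hstds. Qed.

Lemma eig_none x : (forall i, (i <= d)%N -> x != th i) -> eigenspace A x = 0.
Proof.
move=> h; apply/eqP; apply/negPn/negP => ev.
case: hstd => _ _ /(_ x ev) [i lid exi] _.
by move: (h i lid); rewrite exi eqxx.
Qed.

Lemma eigs_none x : (forall i, (i <= d)%N -> x != ths i) -> eigenspace As x = 0.
Proof.
move=> h; apply/eqP; apply/negPn/negP => ev.
case: hstds => _ _ /(_ x ev) [i lid exi] _.
by move: (h i lid); rewrite exi eqxx.
Qed.

Lemma full_of {W : nat -> 'M[K]_n} : is_decomposition d W ->
  (1%:M <= \sum_(i < d.+1) W i)%MS.
Proof. by case=> _ _ /andP[]. Qed.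
Lemma dir_of {W : nat -> 'M[K]_n} : is_decomposition d W ->
  mxdirect (\sum_(i < d.+1) W i).
Proof. by case. Qed.

Lemma fullE : (1%:M <= \sum_(i < d.+1) E i)%MS.
Proof.
apply: submx_trans (full_of D1) _; apply/sumsmx_subP => i _.
apply: submx_trans (capmxSr _ _) _; apply: HH; lia.
Qed.

Lemma fullEs : (1%:M <= \sum_(i < d.+1) Es i)%MS.
Proof.
apply: submx_trans (full_of D1) _; apply/sumsmx_subP => i _.
apply: submx_trans (capmxSl _ _) _; apply: HH; by rewrite -ltnS ltn_ord.
Qed.

Lemma q2n0 : q ^+ 2 != 0. Proof. by rewrite expf_neq0. Qed.

Lemma thS j : th j.+1 = q ^+ 2 * th j.
Proof. by rewrite !thE QfS // mulrCA. Qed.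
Lemma thsS j : ths j = q ^+ 2 * ths j.+1.
Proof. by rewrite !thsE QfS //; field; rewrite Qn0 hq0. Qed.

Lemma th_inj i j : th i = th j -> i = j.
Proof. by rewrite !thE => /(mulfI ha) /Qf_inj; apply. Qed.
Lemma ths_inj i j : ths i = ths j -> i = j.
Proof.
rewrite !thsE => /(mulfI hast) /(congr1 (@GRing.inv _)); rewrite !invrK.
by move/Qf_inj; apply.
Qed.

Lemma E_big j : (d < j)%N -> E j = 0.
Proof.
move=> ltdj; apply: eig_none => i lid; apply/eqP => /th_inj eji.
by move: ltdj; rewrite eji ltnNge lid.
Qed.
Lemma Es_big j : (d < j)%N -> Es j = 0.
Proof.
move=> ltdj; apply: eigs_none => i lid; apply/eqP => /ths_inj eji.
by move: ltdj; rewrite eji ltnNge lid.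
Qed.

Lemma lowerE j : (eigenspace A (th j / q ^+ 2) <= if j is j'.+1 then E j' else 0)%MS.
Proof.
case: j => [|j]; last by rewrite thS mulrC mulKf ?q2n0.
rewrite eig_none // => i lid; apply/negP => /eqP.
have -> : th i = th i.+1 / q ^+ 2 by rewrite thS mulrC mulKf ?q2n0.
by move/(mulIf (invr_neq0 q2n0))/th_inj.
Qed.

Lemma upperE j : (eigenspace A (q ^+ 2 * th j) <= E j.+1)%MS.
Proof. by rewrite /E thS. Qed.

Lemma upperEs j : (eigenspace As (ths j / q ^+ 2) <= Es j.+1)%MS.
Proof. by rewrite thsS mulrC mulKf ?q2n0. Qed.

Lemma lowerEs j : (eigenspace As (q ^+ 2 * ths j) <= if j is j'.+1 then Es j' else 0)%MS.
Proof.
case: j => [|j]; last by rewrite /Es -thsS.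
rewrite eigs_none // => i lid; apply/negP => /eqP.
have -> : q ^+ 2 * ths 0 = ths 0 / (q ^+ 2)^-1 by rewrite invrK mulrC.
have -> : ths i = ths i.+1 / (q ^+ 2)^-1 by rewrite invrK mulrC -thsS.
by move/(mulIf (invr_neq0 (invr_neq0 q2n0)))/ths_inj.
Qed.

Local Notation H m := (\sum_(j < m.+1) E j)%MS.
Local Notation Fs m := (\sum_(j < m.+1) Es j)%MS.
Local Notation G m := (\sum_(m <= j < d.+1) E j)%MS.
Local Notation Gs m := (\sum_(m <= j < d.+1) Es j)%MS.

Lemma cap_sub m (S U V : 'M[K]_n) M (U' V' : 'M[K]_m) :
  (S <= U :&: V)%MS -> (U *m M <= U')%MS -> (V *m M <= V')%MS ->
  (S *m M <= U' :&: V')%MS.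
Proof.
move=> hS hU hV; rewrite sub_capmx; apply/andP; split.
  by apply: submx_trans hU; apply: submxMr; apply: submx_trans hS (capmxSl _ _).
by apply: submx_trans hV; apply: submxMr; apply: submx_trans hS (capmxSr _ _).
Qed.

Lemma incl_a i : (i <= d)%N ->
  (W3 i *m (A - (th (d - i))%:M) <= if (i < d)%N then W3 i.+1 else 0)%MS.
Proof.
move=> lid.
have h := cap_sub (submx_refl (W3 i))
  (oth_G (d - i) (tri_shift (th (d - i)) triAs))
  (own_lower (d - i) E_eig).
case: ifP => ltid.
  have e2 : (d - i.+1 = (d - i).-1)%N by lia.
  rewrite [W3 i.+1]/W3 e2; move: h.
  case e : (d - i)%N => [|m] h; first by lia.
  exact: h.
have e : (d - i = 0)%N by lia.
by move: h; rewrite e capmx0.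
Qed.

Lemma incl_b i : (i <= d)%N ->
  (W3 i *m (As - (ths (d - i))%:M) <= if i is i'.+1 then W3 i' else 0)%MS.
Proof.
move=> lid.
have h := cap_sub (submx_refl (W3 i))
  (own_upper (d - i) Es_eig)
  (oth_H (tri_shift (ths (d - i)) triA) (leq_subr i d)).
case: i lid h => [|i] lid h.
  by move: h; rewrite subn0 G0 cap0mx.
have e : (d - i = (d - i.+1).+1)%N by lia.
by rewrite /W3 e.
Qed.

Lemma incl_e i : (i <= d)%N ->
  (W2 i *m (A - (th i)%:M) <= if (i < d)%N then W2 i.+1 else 0)%MS.
Proof.
move=> lid.
have h := cap_sub (submx_refl (W2 i))
  (oth_G (d - i) (tri_shift (th i) triAs))
  (own_upper i E_eig).
case: ifP => ltid.
  have e2 : (d - i.+1 = (d - i).-1)%N by lia.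
  by rewrite [W2 i.+1]/W2 e2.
have e : i = d by lia.
by move: h; rewrite e G0 capmx0.
Qed.

Lemma incl_f i : (i <= d)%N ->
  (W1 i *m (As - (ths i)%:M) <= if i is i'.+1 then W1 i' else 0)%MS.
Proof.
move=> lid.
have h := cap_sub (submx_refl (W1 i))
  (own_lower i Es_eig)
  (oth_H (tri_shift (ths i) triA) (leq_subr i d)).
case: i lid h => [|i] lid h.
  by move: h; rewrite cap0mx.
have e : (d - i = (d - i.+1).+1)%N by lia.
by rewrite /W1 e.
Qed.

Lemma incl_g i : (i <= d)%N ->
  (W1 i *m (A - (th (d - i))%:M) <= if (i < d)%N then W1 i.+1 else 0)%MS.
Proof.
move=> lid.
have h := cap_sub (submx_refl (W1 i))
  (oth_H (tri_shift (th (d - i)) triAs) lid)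
  (own_lower (d - i) E_eig).
case: ifP => ltid.
  have e2 : (d - i.+1 = (d - i).-1)%N by lia.
  rewrite [W1 i.+1]/W1 e2; move: h.
  case e : (d - i)%N => [|m] h; first by lia.
  exact: h.
have e : (d - i = 0)%N by lia.
by move: h; rewrite e capmx0.
Qed.

Lemma incl_h i : (i <= d)%N ->
  (W2 i *m (As - (ths (d - i))%:M) <= if i is i'.+1 then W2 i' else 0)%MS.
Proof.
move=> lid.
have h := cap_sub (submx_refl (W2 i))
  (own_upper (d - i) Es_eig)
  (oth_G i (tri_shift (ths (d - i)) triA)).
case: i lid h => [|i] lid h.
  by move: h; rewrite subn0 G0 cap0mx.
have e : (d - i = (d - i.+1).+1)%N by lia.
by rewrite /W2 e.
Qed.

Lemma qmq : q - q^-1 != 0.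
Proof.
apply/negP => /eqP e.
have : q ^+ 2 == 1.
  have e' : q = q^-1 by apply/eqP; rewrite -subr_eq0 e.
  by rewrite expr2 {2}e' divff.
by move=> h; move: (hqr (isT : (0 < 2)%N)); rewrite h.
Qed.

Lemma qq1 : q * q - 1 != 0.
Proof. by rewrite subr_eq0 -expr2; exact: (hqr (isT : (0 < 2)%N)). Qed.

Lemma scaled_incl m (S X : 'M[K]_n) (N : 'M[K]_(m, n)) (s lam : K) :
  (S *m (X - lam%:M) <= N)%MS -> (S *m (s *: X - (s * lam)%:M) <= N)%MS.
Proof. by move=> h; rewrite -scale_scalar_mx -scalerBr -scalemxAr scalemx_sub. Qed.

Lemma rel1 (W : nat -> 'M[K]_n) (Y X : 'M[K]_n) (c lam : nat -> K) (Nx : nat -> 'M[K]_n) :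
  is_decomposition d W ->
  (forall i, (i <= d)%N -> W i *m Y = c i *: W i) ->
  (forall i, (i <= d)%N -> W i *m (X - (lam i)%:M) <= Nx i)%MS ->
  (forall i, (i <= d)%N -> Nx i *m Y = (q ^+ 2 * c i) *: Nx i) ->
  (forall i, (i <= d)%N -> c i * lam i = 1) ->
  (q - q^-1)^-1 *: (q *: word [:: X; Y] - q^-1 *: word [:: Y; X]) = 1%:M.
Proof.
move=> dW hY hX hN hc.
rewrite /word /= !mul1mx scalerBr !scalerA -scaleNr.
apply: (rel_check (full_of dW) hY hX hN).
  by field; rewrite qq1 hq0.
move=> i lid; rewrite -mulrA hc // mulr1 -mulrBr mulVf //; exact: qmq.
Qed.

Lemma rel2 (W : nat -> 'M[K]_n) (Y X : 'M[K]_n) (c lam : nat -> K) (Nx : nat -> 'M[K]_n) :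
  is_decomposition d W ->
  (forall i, (i <= d)%N -> W i *m Y = c i *: W i) ->
  (forall i, (i <= d)%N -> W i *m (X - (lam i)%:M) <= Nx i)%MS ->
  (forall i, (i <= d)%N -> Nx i *m Y = (q ^- 2 * c i) *: Nx i) ->
  (forall i, (i <= d)%N -> c i * lam i = 1) ->
  (q - q^-1)^-1 *: (q *: word [:: Y; X] - q^-1 *: word [:: X; Y]) = 1%:M.
Proof.
move=> dW hY hX hN hc.
rewrite /word /= !mul1mx scalerBr !scalerA -scaleNr addrC.
apply: (rel_check (full_of dW) hY hX hN).
  by field; rewrite qq1 hq0.
move=> i lid; rewrite -mulrA hc // mulr1 addrC -mulrBr mulVf //; exact: qmq.
Qed.

Lemma scal_scaled (S M : 'M[K]_n) (s c : K) :
  S *m M = c *: S -> S *m (s *: M) = (s * c) *: S.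
Proof. by move=> h; rewrite -scalemxAr h scalerA. Qed.

Lemma KsW3 i : (i <= d)%N -> W3 i *m Ks = Q i *: W3 i.
Proof. exact: (scal_mx SK). Qed.

Lemma Ks_unit : Ks \in unitmx.
Proof.
rewrite -row_full_unit -sub1mx; apply: submx_trans (full_of D3) _.
apply/sumsmx_subP => i _; have lid : (i <= d)%N by rewrite -ltnS ltn_ord.
have -> : W3 i = (Q i)^-1 *: (W3 i *m Ks) by rewrite KsW3 // scalerA mulVf ?scale1r // Qn0.
by apply: scalemx_sub; apply: submxMl.
Qed.

Lemma KiW3 i : (i <= d)%N -> W3 i *m invmx Ks = (Q i)^-1 *: W3 i.
Proof.
move=> lid.
have e : W3 i = Q i *: (W3 i *m invmx Ks).
  by rewrite scalemxAl -KsW3 // -mulmxA mulmxV ?mulmx1 // Ks_unit.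
by rewrite {2}e scalerA mulVf ?scale1r // Qn0.
Qed.

Lemma R1a : (q - q^-1)^-1 *: (q *: word [:: a^-1 *: A; Ks] - q^-1 *: word [:: Ks; a^-1 *: A]) = 1%:M.
Proof.
apply: (@rel1 W3 Ks (a^-1 *: A) Q (fun i => (Q i)^-1) (fun i => if (i < d)%N then W3 i.+1 else 0) D3 KsW3).
- move=> i lid; have -> : (Q i)^-1 = a^-1 * th (d - i) by rewrite thE Qf_rev // mulKf.
  exact: scaled_incl (incl_a lid).
- move=> i lid; case: ifP => h; last by rewrite mul0mx scaler0.
  by rewrite KsW3 // QfS.
- by move=> i _; rewrite divff // Qn0.
Qed.

Lemma R1b : (q - q^-1)^-1 *: (q *: word [:: ast^-1 *: As; invmx Ks] - q^-1 *: word [:: invmx Ks; ast^-1 *: As]) = 1%:M.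
Proof.
apply: (@rel1 W3 (invmx Ks) (ast^-1 *: As) (fun i => (Q i)^-1) Q (fun i => if i is i'.+1 then W3 i' else 0) D3 KiW3).
- move=> i lid; have -> : Q i = ast^-1 * ths (d - i) by rewrite thsE Qf_rev // invrK mulKf.
  exact: scaled_incl (incl_b lid).
- move=> i lid; case: i lid => [|i] lid; first by rewrite mul0mx scaler0.
  rewrite KiW3 ?(ltnW lid) // QfS // invfM mulrA divff ?mul1r //; exact: q2n0.
- by move=> i _; rewrite mulVf // Qn0.
Qed.

Lemma R2b0 : (q - q^-1)^-1 *: (q *: word [:: bst^-1 *: Bs; a^-1 *: A] - q^-1 *: word [:: a^-1 *: A; bst^-1 *: Bs]) = 1%:M.
Proof.
have hY : forall i, (i <= d)%N -> W2 i *m (bst^-1 *: Bs) = (Q i)^-1 *: W2 i.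
  by move=> i lid; rewrite (scal_scaled _ (scal_mx SBs lid)) cBsE mulKf.
apply: (@rel2 W2 (bst^-1 *: Bs) (a^-1 *: A) (fun i => (Q i)^-1) Q (fun i => if (i < d)%N then W2 i.+1 else 0) D2 hY).
- move=> i lid; have -> : Q i = a^-1 * th i by rewrite thE mulKf.
  exact: scaled_incl (incl_e lid).
- move=> i lid; case: ifP => h; last by rewrite mul0mx scaler0.
  rewrite hY // QfS // invfM; congr (_ *: _); rewrite exprVn //.
- by move=> i _; rewrite mulVf // Qn0.
Qed.

Lemma R2b1 : (q - q^-1)^-1 *: (q *: word [:: b^-1 *: B; ast^-1 *: As] - q^-1 *: word [:: ast^-1 *: As; b^-1 *: B]) = 1%:M.
Proof.
have hY : forall i, (i <= d)%N -> W1 i *m (b^-1 *: B) = Q i *: W1 i.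
  by move=> i lid; rewrite (scal_scaled _ (scal_mx SB lid)) cBE mulKf.
apply: (@rel2 W1 (b^-1 *: B) (ast^-1 *: As) Q (fun i => (Q i)^-1) (fun i => if i is i'.+1 then W1 i' else 0) D1 hY).
- move=> i lid; have -> : (Q i)^-1 = ast^-1 * ths i by rewrite thsE mulKf.
  exact: scaled_incl (incl_f lid).
- move=> i lid; case: i lid => [|i] lid; first by rewrite mul0mx scaler0.
  rewrite hY ?(ltnW lid) // QfS // mulrA mulVf ?mul1r //; exact: q2n0.
- by move=> i _; rewrite divff // Qn0.
Qed.

Lemma R3a : (q - q^-1)^-1 *: (q *: word [:: a^-1 *: A; b^-1 *: B] - q^-1 *: word [:: b^-1 *: B; a^-1 *: A]) = 1%:M.
Proof.
have hY : forall i, (i <= d)%N -> W1 i *m (b^-1 *: B) = Q i *: W1 i.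
  by move=> i lid; rewrite (scal_scaled _ (scal_mx SB lid)) cBE mulKf.
apply: (@rel1 W1 (b^-1 *: B) (a^-1 *: A) Q (fun i => (Q i)^-1) (fun i => if (i < d)%N then W1 i.+1 else 0) D1 hY).
- move=> i lid; have -> : (Q i)^-1 = a^-1 * th (d - i) by rewrite thE Qf_rev // mulKf.
  exact: scaled_incl (incl_g lid).
- move=> i lid; case: ifP => h; last by rewrite mul0mx scaler0.
  by rewrite hY // QfS.
- by move=> i _; rewrite divff // Qn0.
Qed.

Lemma R3b : (q - q^-1)^-1 *: (q *: word [:: ast^-1 *: As; bst^-1 *: Bs] - q^-1 *: word [:: bst^-1 *: Bs; ast^-1 *: As]) = 1%:M.
Proof.
have hY : forall i, (i <= d)%N -> W2 i *m (bst^-1 *: Bs) = (Q i)^-1 *: W2 i.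
  by move=> i lid; rewrite (scal_scaled _ (scal_mx SBs lid)) cBsE mulKf.
apply: (@rel1 W2 (bst^-1 *: Bs) (ast^-1 *: As) (fun i => (Q i)^-1) Q (fun i => if i is i'.+1 then W2 i' else 0) D2 hY).
- move=> i lid; have -> : Q i = ast^-1 * ths (d - i) by rewrite thsE Qf_rev // invrK mulKf.
  exact: scaled_incl (incl_h lid).
- move=> i lid; case: i lid => [|i] lid; first by rewrite mul0mx scaler0.
  rewrite hY ?(ltnW lid) // QfS // invfM mulrA divff ?mul1r //; exact: q2n0.
- by move=> i _; rewrite mulVf // Qn0.
Qed.

Lemma eig_scale_sub (S M : 'M[K]_n) (s y : K) : s != 0 ->
  (S <= eigenspace (s *: M) y)%MS -> (S <= eigenspace M (s^-1 * y))%MS.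
Proof.
move=> s0 /eigenspaceP h; apply/eigenspaceP; apply: (scalerI s0).
by rewrite scalemxAr h !scalerA mulrA divff ?mul1r.
Qed.

Lemma der1 (X Y S : 'M[K]_n) (t : K) :
  (q - q^-1)^-1 *: (q *: word [:: X; Y] - q^-1 *: word [:: Y; X]) = 1%:M ->
  S *m X = t *: S -> t != 0 ->
  (S *m (Y - (t^-1)%:M) <= eigenspace X (q ^- 2 * t))%MS.
Proof.
move=> R SX t0; move: R; rewrite /word /= !mul1mx scalerBr !scalerA -scaleNr => R.
apply: (comm_eig _ R SX).
- by rewrite mulf_neq0 ?invr_neq0 ?qmq.
- by field; rewrite qq1 hq0.
- by field; rewrite qq1 hq0 t0.
Qed.

Lemma der2 (X Y S : 'M[K]_n) (t : K) :
  (q - q^-1)^-1 *: (q *: word [:: Y; X] - q^-1 *: word [:: X; Y]) = 1%:M ->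
  S *m X = t *: S -> t != 0 ->
  (S *m (Y - (t^-1)%:M) <= eigenspace X (q ^+ 2 * t))%MS.
Proof.
move=> R SX t0; move: R; rewrite /word /= !mul1mx scalerBr !scalerA -scaleNr addrC => R.
apply: (comm_eig _ R SX).
- by rewrite oppr_eq0 mulf_neq0 ?invr_neq0 ?qmq.
- by field; rewrite qq1 hq0.
- by field; rewrite qq1 hq0 t0.
Qed.

Lemma EA' j : E j *m (a^-1 *: A) = Q j *: E j.
Proof. by rewrite (scal_scaled _ (E_eig j)) thE mulKf. Qed.
Lemma EsAs' j : Es j *m (ast^-1 *: As) = (Q j)^-1 *: Es j.
Proof. by rewrite (scal_scaled _ (Es_eig j)) thsE mulKf. Qed.

Lemma triK : tri d E Ks.
Proof.
apply: (@tri_of_lower _ _ _ _ _ (fun j => (Q j)^-1)) => j ljd.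
apply: submx_trans (lowerE j).
have := eig_scale_sub (invr_neq0 ha) (der1 R1a (EA' j) (Qn0 j)).
by rewrite invrK thE mulrCA mulrC.
Qed.

Lemma triKi : tri d Es (invmx Ks).
Proof.
apply: (@tri_of_upper _ _ _ _ _ (fun j => Q j) (Es_big (ltnSn d))) => j ljd.
apply: submx_trans (upperEs j).
have := eig_scale_sub (invr_neq0 hast) (der1 R1b (EsAs' j) (invr_neq0 (Qn0 j))).
by rewrite invrK thsE invrK mulrCA mulrC.
Qed.

Lemma triBsE : tri d E (bst^-1 *: Bs).
Proof.
apply: (@tri_of_upper _ _ _ _ _ (fun j => (Q j)^-1) (E_big (ltnSn d))) => j ljd.
apply: submx_trans (upperE j).
have := eig_scale_sub (invr_neq0 ha) (der2 R2b0 (EA' j) (Qn0 j)).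
by rewrite invrK thE mulrCA.
Qed.

Lemma triBsEs : tri d Es (bst^-1 *: Bs).
Proof.
apply: (@tri_of_upper _ _ _ _ _ (fun j => Q j) (Es_big (ltnSn d))) => j ljd.
apply: submx_trans (upperEs j).
have := eig_scale_sub (invr_neq0 hast) (der1 R3b (EsAs' j) (invr_neq0 (Qn0 j))).
by rewrite invrK thsE invrK mulrCA mulrC.
Qed.

Lemma triBE : tri d E (b^-1 *: B).
Proof.
apply: (@tri_of_lower _ _ _ _ _ (fun j => (Q j)^-1)) => j ljd.
apply: submx_trans (lowerE j).
have := eig_scale_sub (invr_neq0 ha) (der1 R3a (EA' j) (Qn0 j)).
by rewrite invrK thE mulrCA mulrC.
Qed.

Lemma triBEs : tri d Es (b^-1 *: B).
Proof.
apply: (@tri_of_lower _ _ _ _ _ (fun j => Q j)) => j ljd.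
apply: submx_trans (lowerEs j).
have := eig_scale_sub (invr_neq0 hast) (der2 R2b1 (EsAs' j) (invr_neq0 (Qn0 j))).
by rewrite invrK thsE invrK mulrCA.
Qed.

Lemma zero_of (W : nat -> 'M[K]_n) i j (S : 'M[K]_n) : is_decomposition d W ->
  (i <= d)%N -> (j <= d)%N -> i != j -> (S <= W i)%MS -> (S <= W j)%MS -> S = 0.
Proof. by move=> dW; apply: direct_cap0 (dir_of dW). Qed.

Lemma FL3up i : (i <= d)%N ->
  (Gs (d - i) <= \sum_(k < d.+1 | (k <= i)%N) W3 k)%MS.
Proof.
move=> lid.
apply: (@flag_sub _ _ _ _ (fun k => (k <= i)%N) _ (if (i < d)%N then H (d - i.+1) else 0) (full_of D3)).
- by move=> k lkd Pk; apply: submx_trans (capmxSl _ _) _; apply: GG; lia.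
- move=> k lkd nPk; case: ifP => ltid; last by lia.
  by apply: submx_trans (capmxSr _ _) _; apply: HH; lia.
- case: ifP => ltid; last by rewrite capmx0.
  apply: (@zero_of W3 i i.+1 _ D3) => //; first by rewrite neq_ltn ltnSn.
    by apply: capmxS => //; apply: HH; lia.
  by apply: capmxS => //; apply: GG; lia.
Qed.

Lemma FL3down i : (i <= d)%N ->
  (H (d - i) <= \sum_(k < d.+1 | (i <= k)%N) W3 k)%MS.
Proof.
move=> lid.
apply: (@flag_sub _ _ _ _ (fun k => (i <= k)%N) _ (if i is i'.+1 then Gs (d - i') else 0) (full_of D3)).
- by move=> k lkd Pk; apply: submx_trans (capmxSr _ _) _; apply: HH; lia.
- move=> k lkd nPk; case: i lid nPk => [|i] lid nPk; first by lia.
  by apply: submx_trans (capmxSl _ _) _; apply: GG; lia.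
- case: i lid => [|i] lid; first by rewrite capmx0.
  apply: (@zero_of W3 i i.+1 _ D3) => //; first by lia.
  + by rewrite neq_ltn ltnSn.
  + by rewrite capmxC; apply: capmxS => //; apply: HH; lia.
  + by rewrite capmxC; apply: capmxS => //; apply: GG; lia.
Qed.

Lemma FL2up m : (m <= d)%N ->
  (Gs (d - m) <= \sum_(k < d.+1 | (k <= m)%N) W2 k)%MS.
Proof.
move=> lmd.
apply: (@flag_sub _ _ _ _ (fun k => (k <= m)%N) _ (G m.+1) (full_of D2)).
- by move=> k lkd Pk; apply: submx_trans (capmxSl _ _) _; apply: GG; lia.
- by move=> k lkd nPk; apply: submx_trans (capmxSr _ _) _; apply: GG; lia.
- case: (ltngtP m d) (lmd) => // [ltmd|->] _; last by rewrite G0 capmx0.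
  apply: (@zero_of W2 m m.+1 _ D2) => //; first by rewrite neq_ltn ltnSn.
    by apply: capmxS => //; apply: GG; lia.
  by apply: capmxS => //; apply: GG; lia.
Qed.

Lemma FL2down m : (m <= d)%N ->
  (G m <= \sum_(k < d.+1 | (m <= k)%N) W2 k)%MS.
Proof.
move=> lmd.
apply: (@flag_sub _ _ _ _ (fun k => (m <= k)%N) _ (if m is m'.+1 then Gs (d - m') else 0) (full_of D2)).
- by move=> k lkd Pk; apply: submx_trans (capmxSr _ _) _; apply: GG; lia.
- move=> k lkd nPk; case: m lmd nPk => [|m] lmd nPk; first by lia.
  by apply: submx_trans (capmxSl _ _) _; apply: GG; lia.
- case: m lmd => [|m] lmd; first by rewrite capmx0.
  apply: (@zero_of W2 m m.+1 _ D2) => //; first by lia.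
  + by rewrite neq_ltn ltnSn.
  + by rewrite capmxC; apply: capmxS => //; apply: GG; lia.
  + by rewrite capmxC; apply: capmxS => //; apply: GG; lia.
Qed.

Lemma FL1up m : (m <= d)%N ->
  (Fs m <= \sum_(k < d.+1 | (k <= m)%N) W1 k)%MS.
Proof.
move=> lmd.
apply: (@flag_sub _ _ _ _ (fun k => (k <= m)%N) _ (if (m < d)%N then H (d - m.+1) else 0) (full_of D1)).
- by move=> k lkd Pk; apply: submx_trans (capmxSl _ _) _; apply: HH; lia.
- move=> k lkd nPk; case: ifP => ltmd; last by lia.
  by apply: submx_trans (capmxSr _ _) _; apply: HH; lia.
- case: ifP => ltmd; last by rewrite capmx0.
  apply: (@zero_of W1 m m.+1 _ D1) => //; first by rewrite neq_ltn ltnSn.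
    by apply: capmxS => //; apply: HH; lia.
  by apply: capmxS => //; apply: HH; lia.
Qed.

Lemma FL1down m : (m <= d)%N ->
  (H (d - m) <= \sum_(k < d.+1 | (m <= k)%N) W1 k)%MS.
Proof.
move=> lmd.
apply: (@flag_sub _ _ _ _ (fun k => (m <= k)%N) _ (if m is m'.+1 then Fs m' else 0) (full_of D1)).
- by move=> k lkd Pk; apply: submx_trans (capmxSr _ _) _; apply: HH; lia.
- move=> k lkd nPk; case: m lmd nPk => [|m] lmd nPk; first by lia.
  by apply: submx_trans (capmxSl _ _) _; apply: HH; lia.
- case: m lmd => [|m] lmd; first by rewrite capmx0.
  apply: (@zero_of W1 m m.+1 _ D1) => //; first by lia.
  + by rewrite neq_ltn ltnSn.
  + by rewrite capmxC; apply: capmxS => //; apply: HH; lia.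
  + by rewrite capmxC; apply: capmxS => //; apply: HH; lia.
Qed.

Lemma sum_mul_sub (W : nat -> 'M[K]_n) (P : pred nat) (M S : 'M[K]_n) :
  (forall k, (k <= d)%N -> P k -> W k *m M <= S)%MS ->
  ((\sum_(k < d.+1 | P k) W k)%MS *m M <= S)%MS.
Proof.
move=> h; rewrite (sumsmxMr _ (fun k : 'I_d.+1 => W k)); apply/sumsmx_subP => k Pk.
by apply: h => //; rewrite -ltnS ltn_ord.
Qed.

Lemma incl_c i : (i <= d)%N ->
  (W2 i *m (Ks - (Q i)%:M) <= if i is i'.+1 then W2 i' else 0)%MS.
Proof.
move=> lid.
have hGs : (Gs (d - i) *m (Ks - (Q i)%:M) <= Gs (d - i).+1)%MS.
  apply: submx_trans (submxMr _ (FL3up lid)) _.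
  apply: (@sum_mul_sub W3 (fun k => (k <= i)%N)) => k lkd lki.
  rewrite mulmxBr KsW3 // mul_mx_scalar -scalerBl.
  case: (ltngtP k i) lki => // [ltki|->] _; last by rewrite subrr scale0r sub0mx.
  by apply: scalemx_sub; apply: submx_trans (capmxSl _ _) _; apply: GG; lia.
have h := cap_sub (submx_refl (W2 i)) hGs (oth_G i (tri_shift (Q i) triK)).
clear hGs; case: i lid h => [|i] lid h.
  by move: h; rewrite subn0 G0 cap0mx.
have e : (d - i = (d - i.+1).+1)%N by lia.
by rewrite /W2 e.
Qed.

Lemma incl_d i : (i <= d)%N ->
  (W1 i *m (invmx Ks - ((Q i)^-1)%:M) <= if (i < d)%N then W1 i.+1 else 0)%MS.
Proof.
move=> lid.
have hH : (H (d - i) *m (invmx Ks - ((Q i)^-1)%:M) <=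
           if (i < d)%N then H (d - i.+1) else 0)%MS.
  apply: submx_trans (submxMr _ (FL3down lid)) _.
  apply: (@sum_mul_sub W3 (fun k => (i <= k)%N)) => k lkd lik.
  rewrite mulmxBr KiW3 // mul_mx_scalar -scalerBl.
  case: (ltngtP i k) lik => // [ltik|<-] _; last by rewrite subrr scale0r sub0mx.
  case: ifP => ltid; last by lia.
  by apply: scalemx_sub; apply: submx_trans (capmxSr _ _) _; apply: HH; lia.
have h := cap_sub (submx_refl (W1 i)) (oth_H (tri_shift ((Q i)^-1) triKi) lid) hH.
case: ifP h => ltid h //.
by move: h; rewrite capmx0.
Qed.

Lemma R2a0 : (q - q^-1)^-1 *: (q *: word [:: Ks; bst^-1 *: Bs] - q^-1 *: word [:: bst^-1 *: Bs; Ks]) = 1%:M.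
Proof.
have hY : forall i, (i <= d)%N -> W2 i *m (bst^-1 *: Bs) = (Q i)^-1 *: W2 i.
  by move=> i lid; rewrite (scal_scaled _ (scal_mx SBs lid)) cBsE mulKf.
apply: (@rel1 W2 (bst^-1 *: Bs) Ks (fun i => (Q i)^-1) Q (fun i => if i is i'.+1 then W2 i' else 0) D2 hY).
- by move=> i lid; exact: incl_c.
- move=> i lid; case: i lid => [|i] lid; first by rewrite mul0mx scaler0.
  rewrite hY ?(ltnW lid) // QfS // invfM mulrA divff ?mul1r //; exact: q2n0.
- by move=> i _; rewrite mulVf // Qn0.
Qed.

Lemma R2a1 : (q - q^-1)^-1 *: (q *: word [:: invmx Ks; b^-1 *: B] - q^-1 *: word [:: b^-1 *: B; invmx Ks]) = 1%:M.
Proof.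
have hY : forall i, (i <= d)%N -> W1 i *m (b^-1 *: B) = Q i *: W1 i.
  by move=> i lid; rewrite (scal_scaled _ (scal_mx SB lid)) cBE mulKf.
apply: (@rel1 W1 (b^-1 *: B) (invmx Ks) Q (fun i => (Q i)^-1) (fun i => if (i < d)%N then W1 i.+1 else 0) D1 hY).
- by move=> i lid; exact: incl_d.
- move=> i lid; case: ifP => h; last by rewrite mul0mx scaler0.
  by rewrite hY // QfS.
- by move=> i _; rewrite divff // Qn0.
Qed.

Lemma q3E : (q ^+ 3 - q ^- 3) / (q - q^-1) = 1 + q ^+ 2 + (q ^+ 2)^-1.
Proof. by field; rewrite hq0 qq1. Qed.

Lemma near_cases k j : (k.-1 <= j)%N && (j <= k.+1)%N ->
  [\/ j = k, j = k.+1 | exists2 k', k = k'.+1 & j = k'].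
Proof.
case/andP=> h1 h2.
case: (ltngtP j k) => [ltjk||->]; last by constructor 1.
- by constructor 3; exists j => //; lia.
- by move=> ltkj; constructor 2; lia.
Qed.

Lemma nearQ k j : (k.-1 <= j)%N && (j <= k.+1)%N ->
  (Q j - Q k) * (Q j - q ^+ 2 * Q k) * (Q j - (q ^+ 2)^-1 * Q k) = 0.
Proof.
case/near_cases => [->|->|[k' -> ->]]; first by rewrite subrr !mul0r.
  by rewrite QfS // subrr mulr0 mul0r.
by rewrite QfS // [in X in _ * X]mulrA mulVf ?mul1r ?subrr ?mulr0 //; exact: q2n0.
Qed.

Lemma nearQi k j : (k.-1 <= j)%N && (j <= k.+1)%N ->
  ((Q j)^-1 - (Q k)^-1) * ((Q j)^-1 - q ^+ 2 * (Q k)^-1) * ((Q j)^-1 - (q ^+ 2)^-1 * (Q k)^-1) = 0.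
Proof.
case/near_cases => [->|->|[k' -> ->]]; first by rewrite subrr !mul0r.
  by rewrite QfS // invfM subrr mulr0.
rewrite QfS // invfM mulrA divff ?mul1r ?subrr ?mulr0 ?mul0r //; exact: q2n0.
Qed.

Lemma sub_full_P (W : nat -> 'M[K]_n) (P : pred nat) m (S : 'M[K]_(m, n)) :
  is_decomposition d W -> (forall j, (j <= d)%N -> P j) ->
  (S <= \sum_(j < d.+1 | P j) W j)%MS.
Proof.
move=> dW hP; apply: submx_trans (submx1 S) _; apply: submx_trans (full_of dW) _.
apply/sumsmx_subP => j _; apply: (@sumsmx_sup _ _ j _ _ _ _ (fun j : 'I_d.+1 => W j)) => //.
by apply: hP; rewrite -ltnS ltn_ord.
Qed.

Local Notation q3 := ((q ^+ 3 - q ^- 3) / (q - q^-1)).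

Lemma S1 : word [:: a^-1 *: A; a^-1 *: A; a^-1 *: A; ast^-1 *: As]
  - q3 *: word [:: a^-1 *: A; a^-1 *: A; ast^-1 *: As; a^-1 *: A]
  + q3 *: word [:: a^-1 *: A; ast^-1 *: As; a^-1 *: A; a^-1 *: A]
  - word [:: ast^-1 *: As; a^-1 *: A; a^-1 *: A; a^-1 *: A] = 0.
Proof.
apply: (@serre_check _ _ d E _ _ Q (fun k j => (k.-1 <= j)%N && (j <= k.+1)%N) _ (q ^+ 2) q2n0 q3E fullE).
- by move=> i _; exact: EA'.
- exact: tri_near (tri_scale _ triA).
- by move=> k j _ _; exact: nearQ.
Qed.

Lemma S2 : word [:: ast^-1 *: As; ast^-1 *: As; ast^-1 *: As; a^-1 *: A]
  - q3 *: word [:: ast^-1 *: As; ast^-1 *: As; a^-1 *: A; ast^-1 *: As]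
  + q3 *: word [:: ast^-1 *: As; a^-1 *: A; ast^-1 *: As; ast^-1 *: As]
  - word [:: a^-1 *: A; ast^-1 *: As; ast^-1 *: As; ast^-1 *: As] = 0.
Proof.
apply: (@serre_check _ _ d Es _ _ (fun i => (Q i)^-1) (fun k j => (k.-1 <= j)%N && (j <= k.+1)%N) _ (q ^+ 2) q2n0 q3E fullEs).
- by move=> i _; exact: EsAs'.
- exact: tri_near (tri_scale _ triAs).
- by move=> k j _ _; exact: nearQi.
Qed.

Lemma S3 : word [:: bst^-1 *: Bs; bst^-1 *: Bs; bst^-1 *: Bs; b^-1 *: B]
  - q3 *: word [:: bst^-1 *: Bs; bst^-1 *: Bs; b^-1 *: B; bst^-1 *: Bs]
  + q3 *: word [:: bst^-1 *: Bs; b^-1 *: B; bst^-1 *: Bs; bst^-1 *: Bs]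
  - word [:: b^-1 *: B; bst^-1 *: Bs; bst^-1 *: Bs; bst^-1 *: Bs] = 0.
Proof.
apply: (@serre_check _ _ d W2 _ _ (fun i => (Q i)^-1) (fun k j => (k.-1 <= j)%N && (j <= k.+1)%N) _ (q ^+ 2) q2n0 q3E (full_of D2)).
- by move=> i lid; rewrite (scal_scaled _ (scal_mx SBs lid)) cBsE mulKf.
- move=> k lkd.
  have h := cap_sub (submx_refl (W2 k)) (oth_G (d - k) triBEs) (oth_G k triBE).
  apply: (dsum_cap (P := fun j => (k.-1 <= j)%N) (Q := fun j => (j <= k.+1)%N) (dir_of D2)).
  + apply: submx_trans h _; apply: submx_trans (capmxSr _ _) _.
    by apply: FL2down; lia.
  + apply: submx_trans h _; apply: submx_trans (capmxSl _ _) _.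
    case: (ltngtP k d) (lkd) => // [ltkd|->] _; last by apply: (@sub_full_P _ (fun j => (j <= d.+1)%N)) => // j; lia.
    have -> : ((d - k).-1 = d - k.+1)%N by lia.
    by apply: FL2up.
- by move=> k j _ _; exact: nearQi.
Qed.

Lemma S4 : word [:: b^-1 *: B; b^-1 *: B; b^-1 *: B; bst^-1 *: Bs]
  - q3 *: word [:: b^-1 *: B; b^-1 *: B; bst^-1 *: Bs; b^-1 *: B]
  + q3 *: word [:: b^-1 *: B; bst^-1 *: Bs; b^-1 *: B; b^-1 *: B]
  - word [:: bst^-1 *: Bs; b^-1 *: B; b^-1 *: B; b^-1 *: B] = 0.
Proof.
apply: (@serre_check _ _ d W1 _ _ Q (fun k j => (k.-1 <= j)%N && (j <= k.+1)%N) _ (q ^+ 2) q2n0 q3E (full_of D1)).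
- by move=> i lid; rewrite (scal_scaled _ (scal_mx SB lid)) cBE mulKf.
- move=> k lkd.
  have h := cap_sub (submx_refl (W1 k)) (oth_H triBsEs lkd) (oth_H triBsE (leq_subr k d)).
  apply: (dsum_cap (P := fun j => (k.-1 <= j)%N) (Q := fun j => (j <= k.+1)%N) (dir_of D1)).
  + apply: submx_trans h _; apply: submx_trans (capmxSr _ _) _.
    case: k lkd => [|k] lkd; first by apply: (@sub_full_P _ (fun j => (0.-1 <= j)%N)) => // j; lia.
    have -> : ((d - k.+1).+1 = d - k)%N by lia.
    by apply: FL1down; lia.
  + apply: submx_trans h _; apply: submx_trans (capmxSl _ _) _.
    case: (ltngtP k d) (lkd) => // [ltkd|->] _; last by apply: (@sub_full_P _ (fun j => (j <= d.+1)%N)) => // j; lia.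
    by apply: FL1up.
- by move=> k j _ _; exact: nearQ.
Qed.

Lemma urep : Urep q (a^-1 *: A) (ast^-1 *: As) (bst^-1 *: Bs) (b^-1 *: B)
         Ks (invmx Ks) (invmx Ks) Ks.
Proof.
have KKi : Ks *m invmx Ks = 1%:M by rewrite mulmxV // Ks_unit.
have KiK : invmx Ks *m Ks = 1%:M by rewrite mulVmx // Ks_unit.
rewrite /Urep; cbv beta zeta; split.
- split.
    by case; rewrite /word /= !mul1mx ?KKi ?KiK.
  by move=> X _; rewrite /word /= !mul1mx -mulmxA KiK mulmx1 mul1mx.
- by case; [exact: R1b | exact: R1a].
- split; first by case; [exact: R2a1 | exact: R2a0].
  by case; [exact: R2b1 | exact: R2b0].
- have -> : word [:: invmx Ks; Ks] = 1%:M by rewrite /word /= !mul1mx KKi.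
  by case; case => //= _; [exact: R3b | exact: R3a].
- move=> y i j [->|->] nij; case: i j nij => [] [] //= _.
  + exact: S2.
  + exact: S1.
  + exact: S4.
  + exact: S3.
Qed.

Lemma irr (hTD : TD_pair A As) :
  irreducible_for [:: a^-1 *: A; ast^-1 *: As; bst^-1 *: Bs; b^-1 *: B;
                      Ks; invmx Ks; invmx Ks; Ks].
Proof.
case: hTD => n0 _ _ _ hirr; split => // W hW; apply: hirr.
- have := hW (a^-1 *: A); rewrite inE eqxx => /(_ isT) h.
  have -> : A = a *: (a^-1 *: A) by rewrite scalerA divff ?scale1r.
  by rewrite -scalemxAr scalemx_sub.
- have := hW (ast^-1 *: As); rewrite !inE eqxx orbT => /(_ isT) h.
  have -> : As = ast *: (ast^-1 *: As) by rewrite scalerA divff ?scale1r.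
  by rewrite -scalemxAr scalemx_sub.
Qed.

End Main.

End Aux.
Unset Implicit Arguments.

Theorem theorem13p2 (K : closedFieldType) (n : nat) (q : K)
  (A As B Bs Ks : 'M[K]_n) (d : nat) (a ast b bst : K) :
  q != 0 ->
  (forall m : nat, (0 < m)%N -> q ^+ m != 1) ->
  a != 0 -> ast != 0 -> b != 0 -> bst != 0 ->
  TD_pair A As ->
  let th := fun i : nat => a * q ^ (Posz (2 * i) - Posz d) in
  let ths := fun i : nat => ast * q ^ (Posz d - Posz (2 * i)) in
  standard_ordering A As d th ->
  standard_ordering As A d ths ->
  let Vs := fun j : nat => eigenspace A (th j) in
  let Vss := fun j : nat => eigenspace As (ths j) in
  (* (V*_0+...+V*_i) /\ (V_0+...+V_{d-i}) *)
  let W1 := fun i : nat =>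
    ((\sum_(j < i.+1) Vss j) :&: (\sum_(j < (d - i).+1) Vs j))%MS in
  (* (V*_{d-i}+...+V*_d) /\ (V_i+...+V_d) *)
  let W2 := fun i : nat =>
    ((\sum_(d - i <= j < d.+1) Vss j) :&: (\sum_(i <= j < d.+1) Vs j))%MS in
  (* (V*_{d-i}+...+V*_d) /\ (V_0+...+V_{d-i}) *)
  let W3 := fun i : nat =>
    ((\sum_(d - i <= j < d.+1) Vss j) :&: (\sum_(j < (d - i).+1) Vs j))%MS in
  is_decomposition d W1 -> is_decomposition d W2 -> is_decomposition d W3 ->
  acts_as_scalar d W1 (fun i => b * q ^ (Posz (2 * i) - Posz d)) B ->
  acts_as_scalar d W2 (fun i => bst * q ^ (Posz d - Posz (2 * i))) Bs ->
  acts_as_scalar d W3 (fun i => q ^ (Posz (2 * i) - Posz d)) Ks ->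
  Urep q (a^-1 *: A) (ast^-1 *: As) (bst^-1 *: Bs) (b^-1 *: B)
         Ks (invmx Ks) (invmx Ks) Ks /\
  irreducible_for [:: a^-1 *: A; ast^-1 *: As; bst^-1 *: Bs; b^-1 *: B;
                      Ks; invmx Ks; invmx Ks; Ks].
Proof.
move=> hq0 hqr ha hast hb hbst hTD th ths hstd hstds Vs Vss W1 W2 W3 D1 D2 D3 SB SBs SK.
split.
- by apply: (@Aux.urep K n q A As B Bs Ks d a ast b bst).
- exact: Aux.irr.
Qed.
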